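(* Let $n,m\ge1$, $\vec x,\vec y\in\hat N^n$ and $\vec a,\vec b\in\hat N^m$. Then, for the componentwise order, (i) $\vec x\tilde\ltimes\vec a<\vec x\tilde\ltimes\vec b$ if and only if $\vec a<\vec b$; (ii) $\vec x\tilde\ltimes\vec a<\vec y\tilde\ltimes\vec a$ if and only if $\vec x<\vec y$.
   Context: $\hat N^n$ ($n\ge1$) is the set of names of planar rooted binary trees with $n$ internal vertices and $\hat N^0=\{()\}$; recursively, every element of $\hat N^n$, $n\ge1$, is uniquely $\vec v_l\vee\vec v_r:=(\vec v_l,1,p+1+\vec v_r)$ with $\vec v_l\in\hat N^p,\vec v_r\in\hat N^q$, $p+q+1=n$, where $k+(w_1,\dots,w_q)=(w_1+k,\dots,w_q+k)$. For $\vec v\in\hat N^n,\vec w\in\hat N^m$: $\vec v\nearrow\vec w=(\vec v,n\triangleright w_1,\dots,n\triangleright w_m)$ with $n\triangleright a=a+n$ for $a\neq1$, $n\triangleright1=1$; $\vec v\nwarrow\vec w=(\vec v,n+\vec w)$; $()$ is a two-sided unit for both. $\varpi_{()}(\vec x)=()$ and $\varpi_{\vec v}(\vec x)=\varpi_{\vec v_l}(\vec x)\nearrow\vec x\nwarrow\varpi_{\vec v_r}(\vec x)$ for $\vec v=\vec v_l\vee\vec v_r$; $\vec u\tilde\ltimes\vec v:=\varpi_{\vec u}(\vec v)\in\hat N^{nm}$. The order is componentwise: $\vec v\le\vec w$ iff $v_i\le w_i$ for all $i$, and $<$ means $\le$ and $\ne$. *)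

(* Defs.v *)
From mathcomp Require Import all_boot.
Set Implicit Arguments. Unset Strict Implicit. Unset Printing Implicit Defensive.

(* Planar rooted binary trees; Node l r = l \vee r. *)
Inductive btree := Leaf | Node of btree & btree.

Fixpoint nint (t : btree) : nat :=
  match t with Leaf => 0 | Node l r => (nint l + nint r).+1 end.

Fixpoint name (t : btree) : seq nat :=
  match t with
  | Leaf => [::]
  | Node l r => name l ++ 1 :: map (addn (nint l).+1) (name r)
  end.

(* \hat N^n as a predicate on sequences *)
Definition Nhat (n : nat) (v : seq nat) : Prop :=
  exists t, nint t = n /\ name t = v.

(* v ↗ w, with n = size v (a name in \hat N^n has length n) *)
Definition nearrow (v w : seq nat) : seq nat :=
  v ++ map (fun a => if a == 1 then 1 else a + size v) w.

Definition nwarrow (v w : seq nat) : seq nat :=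
  v ++ map (addn (size v)) w.

(* varpi_v(x), v given by its (unique) tree *)
Fixpoint varpi (t : btree) (x : seq nat) : seq nat :=
  match t with
  | Leaf => [::]
  | Node l r => nwarrow (nearrow (varpi l x) x) (varpi r x)
  end.

(* u ~⋉ v := varpi_u(v), where u = name tu *)
Definition tltimes (tu : btree) (v : seq nat) : seq nat := varpi tu v.

Definition cle (v w : seq nat) : bool := all2 leq v w.
Definition clt (v w : seq nat) : bool := cle v w && (v != w).

(* Main.v *)
Require Import Defs.
From mathcomp Require Import all_boot.
From mathcomp Require Import zify.

Lemma all2_catE (r : nat -> nat -> bool) (u u' v v' : seq nat) :
  size u = size u' -> all2 r (u ++ v) (u' ++ v') = all2 r u u' && all2 r v v'.
Proof.
elim: u u' => [|a u IH] [|b u'] //= [] /IH ->; by rewrite andbA.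
Qed.

Lemma all2_map_addn (s : nat) (u v : seq nat) :
  all2 leq (map (addn s) u) (map (addn s) v) = all2 leq u v.
Proof. by elim: u v => [|a u IH] [|b v] //=; rewrite IH leq_add2l. Qed.

Lemma all2_map_f (c : nat) (u v : seq nat) :
  all (fun a => 0 < a) u -> all (fun a => 0 < a) v ->
  all2 leq (map (fun a => if a == 1 then 1 else a + c) u)
           (map (fun a => if a == 1 then 1 else a + c) v) = all2 leq u v.
Proof.
elim: u v => [|a u IH] [|b v] //= /andP[Ha Hu] /andP[Hb Hv]; rewrite IH //.
congr (_ && _).
case: eqP => Ea; case: eqP => Eb; lia.
Qed.

Lemma cle_antisym u v : cle u v -> cle v u -> u = v.
Proof.
rewrite /cle; elim: u v => [|a u IH] [|b v] //= /andP[H1 H2] /andP[H3 H4].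
by rewrite (IH v) //; congr (_ :: _); apply/eqP; rewrite eqn_leq H1 H3.
Qed.

Lemma cle_refl u : cle u u.
Proof. by rewrite /cle; elim: u => //= a u ->; rewrite leqnn. Qed.

Lemma clt_transfer u u' c d :
  cle u u' = cle c d -> cle u' u = cle d c -> clt u u' = clt c d.
Proof.
move=> H1 H2; rewrite /clt H1; congr (_ && _); congr negb.
apply/eqP/eqP => E.
  by apply: cle_antisym; [rewrite -H1 | rewrite -H2]; rewrite E cle_refl.
by apply: cle_antisym; [rewrite H1 | rewrite H2]; rewrite E cle_refl.
Qed.

Lemma size_varpi t x : size (varpi t x) = nint t * size x.
Proof.
elim: t => //= l IHl r IHr.
rewrite /nwarrow /nearrow !size_cat !size_map IHl IHr mulSn mulnDl addnA; congr (_ + _); exact: addnC.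
Qed.

Lemma cle_varpi t x y : size x = size y -> all (fun a => 0 < a) x -> all (fun a => 0 < a) y ->
  cle (varpi t x) (varpi t y) = (nint t == 0) || cle x y.
Proof.
move=> Hs Px Py; elim: t => //= l IHl r IHr.
rewrite /nwarrow /nearrow /cle.
rewrite all2_catE; last by rewrite !size_cat !size_map !size_varpi Hs.
rewrite all2_catE; last by rewrite !size_varpi Hs.
rewrite !size_cat !size_varpi !size_map Hs all2_map_addn all2_map_f //.
rewrite -/(cle (varpi l x) (varpi l y)) -/(cle (varpi r x) (varpi r y)) -/(cle x y) IHl IHr.
by case: (cle x y); rewrite ?orbT ?andbF.
Qed.

Lemma size_name t : size (name t) = nint t.
Proof. by elim: t => //= l IHl r IHr; rewrite size_cat /= size_map IHl IHr addnS. Qed.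

Lemma pos_name t : all (fun a => 0 < a) (name t).
Proof.
elim: t => //= l IHl r IHr; rewrite all_cat IHl /= all_map.
by apply/allP => a _ /=; rewrite addSn.
Qed.

Lemma one_name t : 0 < nint t -> 1 \in name t.
Proof. by case: t => //= l r _; rewrite mem_cat in_cons eqxx orbT. Qed.

Definition blk (c k : nat) (x : seq nat) :=
  map (fun a => if a == 1 then c else a + k) x.

Fixpoint enc (m s : nat) (v x : seq nat) : seq nat :=
  match v with
  | [::] => [::]
  | c :: v' => blk ((c.-1) * m).+1 (s * m) x ++ enc m s.+1 v' x
  end.

Lemma enc_cat m s u w x : enc m s (u ++ w) x = enc m s u x ++ enc m (s + size u) w x.
Proof.
elim: u s => [|c u IH] s /=; first by rewrite addn0.
by rewrite IH catA addSnnS.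
Qed.

Lemma enc_shift m s q w x : all (fun a => 0 < a) w ->
  enc m (s + q) (map (addn q) w) x = map (addn (q * m)) (enc m s w x).
Proof.
elim: w s => [|c w IH] s //= /andP[Hc Hw].
rewrite map_cat -addSn IH //; congr (_ ++ _).
rewrite /blk -map_comp; apply: eq_map => a /=.
case: (a == 1); case: c Hc => // c _ /=; nia.
Qed.

Lemma varpi_enc t x : varpi t x = enc (size x) 0 (name t) x.
Proof.
elim: t => //= l IHl r IHr.
rewrite enc_cat size_name add0n /= /nwarrow /nearrow -IHl -catA; congr (_ ++ _).
rewrite size_cat size_map size_varpi mul0n.
congr (_ ++ _).
rewrite -(add0n (nint l).+1) enc_shift ?pos_name // -IHr; congr (map (addn _) _).
by rewrite mulSn addnC.
Qed.

Lemma cle_blk c1 c2 k x :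
  all2 leq (blk c1 k x) (blk c2 k x) = (1 \notin x) || (c1 <= c2).
Proof.
elim: x => [|a x IH] //=; rewrite IH in_cons.
case E: (a == 1).
  move/eqP: E => -> /=.
  by case: (c1 <= c2); rewrite ?orbT ?andbF.
by rewrite eq_sym E leqnn.
Qed.

Lemma cle_enc m s v w x : 0 < m -> 1 \in x -> size v = size w ->
  all (fun a => 0 < a) v -> all (fun a => 0 < a) w ->
  cle (enc m s v x) (enc m s w x) = cle v w.
Proof.
move=> Hm Hx; rewrite /cle.
elim: v w s => [|c v IH] [|d w] s //= [] Hs /andP[Hc Hv] /andP[Hd Hw].
rewrite all2_catE; last by rewrite /blk !size_map.
rewrite IH // cle_blk Hx /= ltnS leq_pmul2r //.
by case: c Hc => // c _; case: d Hd.
Qed.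

Theorem mainTheorem9 (n m : nat) (tx ty ta tb : btree) :
  1 <= n -> 1 <= m ->
  nint tx = n -> nint ty = n -> nint ta = m -> nint tb = m ->
  (clt (tltimes tx (name ta)) (tltimes tx (name tb)) <-> clt (name ta) (name tb)) /\
  (clt (tltimes tx (name ta)) (tltimes ty (name ta)) <-> clt (name tx) (name ty)).
Proof.
move=> Hn Hm Hx Hy Ha Hb; rewrite /tltimes; split.
  have Hs : size (name ta) = size (name tb) by rewrite !size_name Ha Hb.
  rewrite (@clt_transfer _ _ (name ta) (name tb)) //.
    by rewrite cle_varpi ?pos_name //; rewrite Hx; case: (n) Hn.
  by rewrite cle_varpi ?pos_name //; rewrite Hx; case: (n) Hn.
have Hs : size (name tx) = size (name ty) by rewrite !size_name Hx Hy.
have H1 : 1 \in name ta by apply: one_name; rewrite Ha.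
have Hm' : 0 < size (name ta) by rewrite size_name Ha.
rewrite !varpi_enc (@clt_transfer _ _ (name tx) (name ty)) //;
  by rewrite cle_enc ?pos_name.
Qed.
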